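(* Let $p$ be a positive stochastic choice function on a finite set $X$ satisfying: for any $A\in\mathscr{A}$, $a,b\in A$ and $x\notin A$ with $a\sim_p x$ and $b\sim_p x$, one has $\frac{p(a,A)}{p(b,A)}=\frac{p(a,A\cup x)}{p(b,A\cup x)}$. Then the relation $\sim_p$ is transitive (hence, being reflexive and symmetric, an equivalence relation on $X$).
   Context: $X$ is a finite set and $\mathscr{A}$ the collection of nonempty subsets of $X$. A stochastic choice function is $p:X\times\mathscr{A}\to[0,1]$ with $\sum_{a\in A}p(a,A)=1$ and $p(x,A)=0$ for $x\notin A$; $p$ is positive: $p(a,A)>0$ for $a\in A$. $A\cup x$ denotes $A\cup\{x\}$. $a\sim_p b$ means: $\frac{p(a,A)}{p(b,A)}=\frac{p(a,\{a,b\})}{p(b,\{a,b\})}$ for every $A\in\mathscr{A}$ with $a,b\in A$. *)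

(* Defs.v *)
From mathcomp Require Import all_boot all_order all_algebra.
Set Implicit Arguments. Unset Strict Implicit. Unset Printing Implicit Defensive.
Import Order.TTheory GRing.Theory Num.Theory.
Local Open Scope ring_scope.

(* A stochastic choice function on a finite set X: p x A is the probability
   of choosing x from the menu A (A ranges over nonempty subsets of X;
   values on the empty set are irrelevant). *)
Definition stochastic_choice (R : realFieldType) (X : finType)
  (p : X -> {set X} -> R) : Prop :=
  forall A : {set X}, A != set0 ->
    [/\ forall x, 0 <= p x A <= 1,
        \sum_(a in A) p a A = 1 &
        forall x, x \notin A -> p x A = 0].

Definition positive_choice (R : realFieldType) (X : finType)
  (p : X -> {set X} -> R) : Prop :=
  forall (A : {set X}) (a : X), a \in A -> 0 < p a A.

Definition sim_p (R : realFieldType) (X : finType)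
  (p : X -> {set X} -> R) (a b : X) : Prop :=
  forall A : {set X}, a \in A -> b \in A ->
    p a A / p b A = p a [set a; b] / p b [set a; b].

(* Main.v *)
Require Import Defs.
From mathcomp Require Import all_boot all_order all_algebra.
From mathcomp Require Import ring.
Import Order.TTheory GRing.Theory Num.Theory.
Local Open Scope ring_scope.

Theorem mainTheorem2 (R : realFieldType) (X : finType)
  (p : X -> {set X} -> R) :
  stochastic_choice p -> positive_choice p ->
  (forall (A : {set X}) (a b x : X),
     A != set0 -> a \in A -> b \in A -> x \notin A ->
     sim_p p a x -> sim_p p b x ->
     p a A / p b A = p a (x |: A) / p b (x |: A)) ->
  forall a b c : X, sim_p p a b -> sim_p p b c -> sim_p p a c.
Proof.
move=> _ pos H a b c ab bc.
have nz : forall (B : {set X}) x, x \in B -> p x B != 0.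
  by move=> B x xB; rewrite lt0r_neq0 // pos.
have symm : forall u v, sim_p p u v -> sim_p p v u.
  move=> u v uv B vB uB.
  have -> : [set v; u] = [set u; v] by apply/setP=> z; rewrite !inE orbC.
  by rewrite -[LHS]invf_div (uv B uB vB) invf_div.
have key : forall B : {set X}, a \in B -> b \in B -> c \in B ->
    p a B / p c B = p a [set a; b] / p b [set a; b] * (p b [set b; c] / p c [set b; c]).
  move=> B aB bB cB; rewrite -(ab B aB bB) -(bc B bB cB).
  have := nz B b bB; have := nz B c cB => ??; field; apply/andP; split => //.
have [<-|nab] := eqVneq b a; first exact: bc.
have [<-|nbc] := eqVneq b c; first exact: ab.
have bAC : b \notin [set a; c] by rewrite !inE negb_or nab nbc.
have cb := symm _ _ bc.
have E : p a [set a; c] / p c [set a; c] =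
    p a [set a; b] / p b [set a; b] * (p b [set b; c] / p c [set b; c]).
  have ne : [set a; c] != set0 by apply/set0Pn; exists a; rewrite !inE eqxx.
  rewrite (H [set a; c] a c b ne _ _ bAC ab cb) ?inE ?eqxx ?orbT //.
  by apply: key; rewrite !inE eqxx ?orbT.
move=> A aA cA; rewrite E.
have [bA|bA] := boolP (b \in A); first exact: key.
have ne : A != set0 by apply/set0Pn; exists a.
rewrite (H A a c b ne aA cA bA ab cb).
by apply: key; rewrite !inE ?eqxx ?aA ?cA ?orbT.
Qed.
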